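(* Fix a number $x$ (real or complex) and let $(u_n)_{n\ge0}$ satisfy $(n+\tfrac12)u_{n+1}=2xn\,u_n-(n-\tfrac12)u_{n-1}$ for all $n\ge1$. Define $\hat u_n=2x\,u_n-u_{n+1}-u_{n-1}$ for $n\ge1$. Then $(n+\tfrac32)\hat u_{n+1}=2xn\,\hat u_n-(n-\tfrac32)\hat u_{n-1}$ for all $n\ge2$. *)

(* Defs.v *)
From mathcomp Require Import all_boot all_order all_algebra.
Set Implicit Arguments. Unset Strict Implicit. Unset Printing Implicit Defensive.
Import Order.TTheory GRing.Theory Num.Theory.
Local Open Scope ring_scope.

(* hat u_n = 2 x u_n - u_{n+1} - u_{n-1}  (meaningful for n >= 1) *)
Definition uhat (R : ringType) (x : R) (u : nat -> R) (n : nat) : R :=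
  2 * x * u n - u n.+1 - u n.-1.

(* Main.v *)
Require Import Defs.
From mathcomp Require Import all_boot all_order all_algebra.
From mathcomp Require Import ring.
Import Order.TTheory GRing.Theory Num.Theory.
Local Open Scope ring_scope.

Theorem theorem2 (R : numFieldType) (x : R) (u : nat -> R) :
  (forall n : nat, (1 <= n)%N ->
     (n%:R + 2^-1) * u n.+1 = 2 * x * n%:R * u n - (n%:R - 2^-1) * u n.-1) ->
  forall n : nat, (2 <= n)%N ->
    (n%:R + 3 / 2) * uhat x u n.+1
    = 2 * x * n%:R * uhat x u n - (n%:R - 3 / 2) * uhat x u n.-1.
Proof.
move=> H [|[|m]] // _.
have E1 := H m.+1 isT; have E2 := H m.+2 isT; have E3 := H m.+3 isT.
rewrite /= in E1 E2 E3; rewrite /uhat /=.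
have h2 : (2:R) != 0 by rewrite pnatr_eq0.
move: E1 E2 E3.
set a := u m; set b := u m.+1; set c := u m.+2; set d := u m.+3; set e := u m.+4.
move=> E1 E2 E3; clearbody a b c d e.
apply: subr0_eq.
have Z : (- ((m.+3%:R + 2^-1) * e - (2 * x * (m.+3%:R) * d - (m.+3%:R - 2^-1) * c))
   + 2 * x * ((m.+2%:R + 2^-1) * d - (2 * x * (m.+2%:R) * c - (m.+2%:R - 2^-1) * b))
   - ((m.+1%:R + 2^-1) * c - (2 * x * (m.+1%:R) * b - (m.+1%:R - 2^-1) * a))) = 0.
  by rewrite E1 E2 E3 !subrr; ring.
by rewrite -[RHS]Z; field.
Qed.
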